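(* Let $G$ be a countable graph. The following are equivalent: (i) there exists a countable graph $G'$ such that $G$ and $G'$ are independent, i.e. $G \not\to G'$ and $G' \not\to G$; (ii) $G$ is not bipartite and $G$ does not contain $K_\omega$ as a subgraph.
   Context: All graphs are simple, undirected and loopless. A homomorphism $f: G \to G'$ is a map $V(G) \to V(G')$ such that $\{x,y\} \in E(G)$ implies $\{f(x),f(y)\} \in E(G')$. We write $G \to G'$ (or $G \le G'$) if a homomorphism exists, and $G \not\to G'$ otherwise. $K_\omega$ denotes the countably infinite complete graph. A set of graphs is independent if there is no homomorphism between any two distinct members of the set. *)

(* Defs.v *)
From Stdlib Require Import Arith.

Record graph : Type := Graph {
  vert : Type;
  adj : vert -> vert -> Prop;
  adj_sym : forall x y, adj x y -> adj y x;
  adj_irrefl : forall x, ~ adj x x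
}.

Definition countable_graph (G : graph) : Prop :=
  exists f : vert G -> nat, forall x y, f x = f y -> x = y.

Definition is_hom (G H : graph) (f : vert G -> vert H) : Prop :=
  forall x y, adj G x y -> adj H (f x) (f y).

Definition hom (G H : graph) : Prop := exists f : vert G -> vert H, is_hom G H f.

Definition independent (G H : graph) : Prop := ~ hom G H /\ ~ hom H G.

Definition bipartite (G : graph) : Prop :=
  exists c : vert G -> bool, forall x y, adj G x y -> c x <> c y.

Definition Komega_adj (i j : nat) : Prop := i <> j.
Lemma Komega_sym : forall i j, Komega_adj i j -> Komega_adj j i.
Proof. unfold Komega_adj; intros i j H E; apply H; now symmetry. Qed.
Lemma Komega_irrefl : forall i, ~ Komega_adj i i.
Proof. unfold Komega_adj; intros i H; now apply H. Qed.
Definition Komega : graph := Graph nat Komega_adj Komega_sym Komega_irrefl.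

(* H is (isomorphic to) a (not necessarily induced) subgraph of G:
   an injective homomorphism H -> G exists. *)
Definition contains_subgraph (G H : graph) : Prop :=
  exists f : vert H -> vert G, (forall x y, f x = f y -> x = y) /\ is_hom H G f.

(* Main.v *)
Require Import Defs.
From Stdlib Require Import Arith Lia List ClassicalEpsilon Classical FunctionalExtensionality PropExtensionality ProofIrrelevance Cantor FinFun.
Import ListNotations.

Inductive W (G : graph) : vert G -> vert G -> nat -> Prop :=
| W0 : forall x, W G x x 0
| WS : forall x y z n, adj G x y -> W G y z n -> W G x z (S n).

Lemma W_app G x y z n m : W G x y n -> W G y z m -> W G x z (n + m).
Proof. induction 1; simpl; intros; auto. econstructor; eauto. Qed.

Lemma W_snoc G x y z n : W G x y n -> adj G y z -> W G x z (S n).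
Proof. intros H1 H2. rewrite <- Nat.add_1_r. eapply W_app; eauto. econstructor; eauto. constructor. Qed.

Lemma W_rev G x y n : W G x y n -> W G y x n.
Proof. induction 1. constructor. eapply W_snoc; eauto. apply adj_sym; auto. Qed.

Lemma W_hom G H f n x y : is_hom G H f -> W G x y n -> W H (f x) (f y) n.
Proof. intros Hf; induction 1; econstructor; eauto. Qed.

Definition oddw G n := Nat.Odd n /\ exists x, W G x x n.

Lemma nonbip_oddw G : ~ bipartite G -> exists n, oddw G n.
Proof.
  intros Hnb. apply NNPP; intro Hno.
  apply Hnb.
  set (conn := fun x y => exists n, W G y x n).
  set (r := fun x : vert G => epsilon (inhabits x) (conn x)).
  assert (Hr : forall x, exists n, W G (r x) x n).
  { intro x. unfold r. apply (epsilon_spec (inhabits x) (conn x)). exists x, 0. constructor. }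
  assert (Hrr : forall x y, adj G x y -> r x = r y).
  { intros x y Hxy. unfold r.
    assert (conn x = conn y).
    { extensionality z. apply propositional_extensionality. unfold conn; split.
      - intros [n Hn]. exists (S n). eapply W_snoc; eauto.
      - intros [n Hn]. exists (S n). eapply W_snoc; eauto. apply adj_sym; auto. }
    rewrite H. apply epsilon_inh_irrelevance. exists y, 0. constructor. }
  exists (fun x => if excluded_middle_informative (exists n, W G (r x) x n /\ Nat.Even n) then true else false).
  intros x y Hxy. pose proof (Hrr x y Hxy) as E.
  destruct (excluded_middle_informative (exists n, W G (r x) x n /\ Nat.Even n)) as [[n1 [W1 E1]]|N1];
  destruct (excluded_middle_informative (exists n, W G (r y) y n /\ Nat.Even n)) as [[n2 [W2 E2]]|N2];
  try discriminate; intros _.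
  - apply Hno. exists (n1 + S n2). split.
    + destruct E1 as [a ->]; destruct E2 as [b ->]. exists (a+b). lia.
    + exists (r x). eapply W_app; eauto. econstructor; eauto. rewrite E. apply W_rev; auto.
  - destruct (Hr x) as [n1 W1]. apply N2. exists (S n1). split.
    + rewrite <- E. eapply W_snoc; eauto.
    + destruct (Nat.Even_or_Odd n1) as [Ev|Od]. exfalso; apply N1; eauto.
      destruct Od as [a ->]. exists (S a). lia.
Qed.

Record dg := { dV : Type; darc : dV -> dV -> Prop; dh : dV -> nat;
  dh_arc : forall u v, darc u v -> dh u < dh v }.

Definition uadj (D : dg) (u v : dV D) := darc D u v \/ darc D v u.
Lemma uadj_sym D u v : uadj D u v -> uadj D v u.
Proof. unfold uadj; tauto. Qed.
Lemma uadj_irr D u : ~ uadj D u u.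
Proof. unfold uadj; intros [H|H]; apply dh_arc in H; lia. Qed.
Definition und (D : dg) : graph := Graph (dV D) (uadj D) (uadj_sym D) (uadj_irr D).

Definition dEV (D : dg) := {p : dV D * dV D | darc D (fst p) (snd p)}.
Definition darc' (D : dg) (e e' : dEV D) := snd (proj1_sig e) = fst (proj1_sig e').
Definition dh' (D : dg) (e : dEV D) := dh D (fst (proj1_sig e)).
Lemma dh_arc' D : forall u v, darc' D u v -> dh' D u < dh' D v.
Proof. intros [[a b] H] [[c d] H'] E; unfold darc', dh' in *; simpl in *. subst.
  apply dh_arc in H; auto. Qed.
Definition delta (D : dg) : dg := Build_dg (dEV D) (darc' D) (dh' D) (dh_arc' D).

Definition pt (D : dg) (e : dEV D) (b : bool) : dV D :=
  if b then snd (proj1_sig e) else fst (proj1_sig e).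

Definition par (n : nat) : bool := Nat.odd n.

Lemma delta_walk_gen D e f n : W (und (delta D)) e f n -> n = 0 \/
  exists q, forall b, exists j, W (und D) (pt D e b) (pt D f q) j /\
    Nat.odd j = xorb (Nat.odd n) (xorb b q) /\ j <= n /\
    (j = n -> (b = false /\ q = false /\ dh D (pt D e b) + n <= dh D (pt D f q)) \/
              (b = true /\ q = true /\ dh D (pt D f q) + n <= dh D (pt D e b))).
Proof.
  induction 1 as [x|x y z n Hxy Hyz IH]; [left; reflexivity|right].
  destruct x as [[x1 x2] Hx]; destruct y as [[y1 y2] Hy].
  destruct Hxy as [Hf|Hb]; cbn in Hf || cbn in Hb.
  -
    unfold darc' in Hf; simpl in Hf, Hx; subst y1.
    assert (Hstep : forall b, exists c, W (und D) (pt D (exist _ (x1,x2) Hx) b) x2 c /\ Nat.odd c = negb b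
       /\ c <= 1 /\ (c = 1 -> b = false)).
    { intros [|]; simpl. exists 0; repeat split; auto; try constructor; lia.
      exists 1; repeat split; auto. econstructor. left; exact Hx. constructor. }
    destruct IH as [->|[q Hq]].
    + inversion Hyz; subst. exists false. intros b.
      destruct (Hstep b) as [c [Wc [Pc [Bc Ec]]]]. exists c. split; [exact Wc|].
      split. rewrite Pc; destruct b; reflexivity. split. lia.
      intros ->. left. specialize (Ec eq_refl); subst b. simpl. repeat split; auto.
      pose proof (dh_arc D _ _ Hx). simpl in *. lia.
    + exists q. intros b. destruct (Hstep b) as [c [Wc [Pc [Bc Ec]]]].
      destruct (Hq false) as [j [Wj [Pj [Bj Ej]]]]. exists (c + j).
      split. eapply W_app; eauto.
      split. rewrite Nat.odd_add, Pc, Pj. simpl. rewrite Nat.odd_succ, <- Nat.negb_odd.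
        destruct b, q, (Nat.odd n); reflexivity.
      split. lia.
      intros Ecj. assert (c = 1) by lia. assert (Hjn : j = n) by lia. subst c.
      specialize (Ec eq_refl); subst b. destruct (Ej Hjn) as [[_ [Hq0 Hh]]|[Hc _]]; [|discriminate].
      left. repeat split; auto. simpl in *. pose proof (dh_arc D _ _ Hx). simpl in *. lia.
  -
    unfold darc' in Hb; simpl in Hb, Hx; subst y2.
    assert (Hstep : forall b, exists c, W (und D) (pt D (exist _ (x1,x2) Hx) b) x1 c /\ Nat.odd c = b
       /\ c <= 1 /\ (c = 1 -> b = true)).
    { intros [|]; simpl.
      exists 1; repeat split; auto. econstructor. right; exact Hx. constructor.
      exists 0; repeat split; auto; try constructor; lia. }
    destruct IH as [->|[q Hq]].
    + inversion Hyz; subst. exists true. intros b.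
      destruct (Hstep b) as [c [Wc [Pc [Bc Ec]]]]. exists c. split; [exact Wc|].
      split. rewrite Pc; destruct b; reflexivity. split. lia.
      intros ->. right. specialize (Ec eq_refl); subst b. simpl. repeat split; auto.
      pose proof (dh_arc D _ _ Hx). simpl in *. lia.
    + exists q. intros b. destruct (Hstep b) as [c [Wc [Pc [Bc Ec]]]].
      destruct (Hq true) as [j [Wj [Pj [Bj Ej]]]]. exists (c + j).
      split. eapply W_app; eauto.
      split. rewrite Nat.odd_add, Pc, Pj. simpl. rewrite Nat.odd_succ, <- Nat.negb_odd.
        destruct b, q, (Nat.odd n); reflexivity.
      split. lia.
      intros Ecj. assert (c = 1) by lia. assert (Hjn : j = n) by lia. subst c.
      specialize (Ec eq_refl); subst b. destruct (Ej Hjn) as [[Hc _]|[_ [Hq0 Hh]]]; [discriminate|].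
      right. repeat split; auto. simpl in *. pose proof (dh_arc D _ _ Hx). simpl in *. lia.
Qed.

Lemma delta_oddw D n : oddw (und (delta D)) n -> exists j, j + 2 <= n /\ oddw (und D) j.
Proof.
  intros [Hodd [e He]]. destruct (delta_walk_gen D e e n He) as [->|[q Hq]].
  - destruct Hodd as [a Ha]; lia.
  - destruct (Hq q) as [j [Wj [Pj [Bj Ej]]]].
    rewrite Bool.xorb_nilpotent, Bool.xorb_false_r in Pj.
    assert (Nat.odd n = true) by (apply Nat.odd_spec; auto).
    assert (j <> n).
    { intro Hjn. destruct (Ej Hjn) as [[_ [_ Hh]]|[_ [_ Hh]]]; destruct Hodd as [a Ha]; lia. }
    exists j. split.
    + assert (Nat.odd j = true) by congruence. apply Nat.odd_spec in H1. destruct H1 as [a ->].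
      destruct Hodd as [b ->]. lia.
    + split. apply Nat.odd_spec; congruence. eauto.
Qed.

Definition base : dg := Build_dg nat lt (fun n => n) (fun u v H => H).
Fixpoint Dk (k : nat) : dg := match k with 0 => base | S k => delta (Dk k) end.

Lemma oddgirth k n : oddw (und (Dk k)) n -> 2 * k + 3 <= n.
Proof.
  revert n; induction k; intros n Hn.
  - destruct Hn as [[a Ha] [x Hx]]. simpl.
    destruct (Nat.eq_dec n 1) as [->|]; [|lia].
    inversion Hx as [|x0 y z n0 Hxy Hyz]; subst. inversion Hyz; subst. exfalso; exact (adj_irrefl _ _ Hxy).
  - simpl in Hn. apply delta_oddw in Hn. destruct Hn as [j [Hj Hoj]]. apply IHk in Hoj. lia.
Qed.

Definition FC (G : graph) := exists (T : Type) (l : list T) (c : vert G -> T),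
  (forall x, In (c x) l) /\ (forall x y, adj G x y -> c x <> c y).

Lemma FC_hom G H : hom G H -> FC H -> FC G.
Proof. intros [f Hf] [T [l [c [H1 H2]]]]. exists T, l, (fun x => c (f x)). split; auto. Qed.

Fixpoint allbl (m : nat) : list (list bool) :=
  match m with 0 => [[]] | S m => flat_map (fun s => [true :: s; false :: s]) (allbl m) end.
Lemma allbl_spec s : In s (allbl (length s)).
Proof. induction s as [|b s IH]; simpl; auto. apply in_flat_map. exists s; split; auto.
  destruct b; simpl; auto. Qed.

Lemma map_eq_in {A B} (f g : A -> B) l t : map f l = map g l -> In t l -> f t = g t.
Proof. induction l; simpl; intros E H; [contradiction|]. injection E; intros.
  destruct H; subst; auto. Qed.

Lemma FC_delta D : FC (und (delta D)) -> FC (und D).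
Proof.
  intros [T [l [c [H1 H2]]]].
  set (c' := fun u : dV D => map (fun t => if excluded_middle_informative
        (exists w (Hw : darc D u w), c (exist _ (u,w) Hw) = t) then true else false) l).
  assert (Key : forall u v (H : darc D u v), c' u <> c' v).
  { intros u v H E.
    assert (Ht := map_eq_in _ _ l (c (exist _ (u,v) H)) E (H1 _)). simpl in Ht.
    destruct (excluded_middle_informative _) as [_|N1].
    2:{ apply N1. exists v, H. reflexivity. }
    destruct (excluded_middle_informative _) as [[w [Hw Ew]]|N2]; [|discriminate].
    eapply H2; [|symmetry; exact Ew]. left. simpl. unfold darc'. reflexivity. }
  exists (list bool), (allbl (length l)), c'. split.
  - intro x. assert (length (c' x) = length l) as HL by (unfold c'; apply length_map). rewrite <- HL. apply allbl_spec.
  - intros x y [H|H]. apply Key; auto. intro E; symmetry in E; eapply Key; eauto.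
Qed.

Lemma base_notFC : ~ FC (und base).
Proof.
  intros [T [l [c [H1 H2]]]].
  assert (Inj : FinFun.Injective c).
  { intros u v E. destruct (Nat.lt_trichotomy u v) as [h|[h|h]]; auto;
    exfalso; eapply H2; eauto; [left|right]; exact h. }
  assert (ND := FinFun.Injective_map_NoDup Inj (seq_NoDup (S (length l)) 0)).
  assert (incl (map c (seq 0 (S (length l)))) l).
  { intros t Ht. apply in_map_iff in Ht. destruct Ht as [x [<- _]]. auto. }
  apply (NoDup_incl_length ND) in H. rewrite length_map, length_seq in H. lia.
Qed.

Lemma Dk_notFC k : ~ FC (und (Dk k)).
Proof. induction k; simpl. apply base_notFC. intro H; apply IHk, FC_delta, H. Qed.

Lemma count_delta D (f : dV D -> nat) : (forall x y, f x = f y -> x = y) ->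
  exists g : dEV D -> nat, forall x y, g x = g y -> x = y.
Proof.
  intros Hf. exists (fun e => Cantor.to_nat (f (fst (proj1_sig e)), f (snd (proj1_sig e)))).
  intros [[a b] H] [[a' b'] H'] E.
  apply (f_equal Cantor.of_nat) in E. rewrite !Cantor.cancel_of_to in E. simpl in E. injection E; intros E2 E1.
  apply Hf in E1, E2. subst. f_equal. apply proof_irrelevance.
Qed.

Lemma Dk_count k : countable_graph (und (Dk k)).
Proof.
  unfold countable_graph. induction k; simpl.
  - exists (fun n => n); auto.
  - destruct IHk as [f Hf]. exact (count_delta (Dk k) f Hf).
Qed.

Definition pr (a b : nat) := Cantor.to_nat (a, b).
Lemma pr_inj a b a' b' : pr a b = pr a' b' -> a = a' /\ b = b'.
Proof. unfold pr; intro E. apply (f_equal Cantor.of_nat) in E. rewrite !Cantor.cancel_of_to in E.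
  injection E; auto. Qed.
Arguments pr : simpl never.

Section CompSec.
Variable G : graph.
Notation V := (vert G).

Fixpoint cl (l : list V) : Prop :=
  match l with [] => True | x :: l => cl l /\ Forall (adj G x) l end.

Definition ssuf (s t : list V) := exists p, p <> [] /\ t = p ++ s.
Definition cadjL (s t : list V) := ssuf s t \/ ssuf t s.

Lemma ssuf_irr s : ~ ssuf s s.
Proof. intros [p [Hp E]]. apply (f_equal (@length V)) in E. rewrite length_app in E.
  destruct p; [congruence|simpl in E; lia]. Qed.

Definition CV := {l : list V | cl l}.
Definition cadj (u v : CV) := cadjL (proj1_sig u) (proj1_sig v).
Lemma cadj_sym u v : cadj u v -> cadj v u. Proof. unfold cadj, cadjL; tauto. Qed.
Lemma cadj_irr u : ~ cadj u u. Proof. unfold cadj, cadjL; intros [H|H]; eapply ssuf_irr; eauto. Qed.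
Definition Comp : graph := Graph CV cadj cadj_sym cadj_irr.

Lemma chain (P : list V -> Prop) :
  (forall s, P s -> exists x, P (x :: s) /\ Forall (adj G x) s) -> P [] ->
  contains_subgraph G Komega.
Proof.
  intros Hstep H0.
  set (PS := {s | P s}).
  set (xx := fun s : PS => proj1_sig (constructive_indefinite_description _ (Hstep _ (proj2_sig s)))).
  assert (Hxx : forall s : PS, P (xx s :: proj1_sig s) /\ Forall (adj G (xx s)) (proj1_sig s)).
  { intro s. unfold xx. destruct (constructive_indefinite_description _ _); simpl; auto. }
  set (F := fun s : PS => exist P (xx s :: proj1_sig s) (proj1 (Hxx s)) : PS).
  set (u := fun n => Nat.iter n F (exist P [] H0)).
  set (a := fun n => xx (u n)).
  assert (Hu : forall n, proj1_sig (u (S n)) = a n :: proj1_sig (u n)) by reflexivity.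
  assert (Hin : forall j i, j < i -> In (a j) (proj1_sig (u i))).
  { intros j i; induction i; intro H; [lia|]. rewrite Hu. simpl.
    destruct (Nat.eq_dec j i); [left; subst; auto|right; apply IHi; lia]. }
  assert (Hadj : forall j i, j < i -> adj G (a i) (a j)).
  { intros j i H. pose proof (proj2 (Hxx (u i))) as HF. rewrite Forall_forall in HF.
    apply HF, Hin, H. }
  exists a. split.
  - intros i j E. destruct (Nat.lt_trichotomy i j) as [h|[h|h]]; auto; exfalso.
    + apply Hadj in h. rewrite E in h. eapply adj_irrefl; eauto.
    + apply Hadj in h. rewrite E in h. eapply adj_irrefl; eauto.
  - intros i j Hij. unfold Komega_adj in Hij. destruct (Nat.lt_trichotomy i j) as [h|[h|h]].
    + apply adj_sym, Hadj, h.
    + contradiction.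
    + apply Hadj, h.
Qed.

Lemma cl_app q l : cl (q ++ l) -> cl l.
Proof. induction q; simpl; tauto. Qed.

Lemma Comp_notto : ~ contains_subgraph G Komega -> ~ hom Comp G.
Proof.
  intros NK [f Hf]. apply NK.
  set (f' := fun l : list V => match excluded_middle_informative (cl l) with
     | left H => f (exist _ l H) | right _ => f (exist _ [] I) end).
  assert (Ef : forall l (H : cl l), f' l = f (exist _ l H)).
  { intros l H. unfold f'. destruct (excluded_middle_informative _); [|contradiction].
    f_equal. f_equal. apply proof_irrelevance. }
  apply (chain (fun s => cl s /\ forall y, In y s -> exists s', ssuf s' s /\ cl s' /\ y = f' s')).
  - intros s [Hs Hy]. exists (f' s).
    assert (Fa : Forall (adj G (f' s)) s).
    { apply Forall_forall. intros y Hin. destruct (Hy y Hin) as [s' [Hss [Hc ->]]].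
      rewrite (Ef s Hs), (Ef s' Hc). apply Hf. right. exact Hss. }
    split; [|exact Fa]. split. simpl; auto.
    intros y [<-|Hin].
    + exists s. split; [|split; auto]. exists [f' s]. split; [congruence|reflexivity].
    + destruct (Hy y Hin) as [s' [[p [Hp Ep]] [Hc ->]]]. exists s'. split; [|split; auto].
      exists (f' s :: p). split; [congruence|]. rewrite Ep. reflexivity.
  - split. exact I. intros y [].
Qed.

Lemma Comp_count : countable_graph G -> countable_graph Comp.
Proof.
  intros [g Hg].
  set (code := fix code (l : list V) : nat := match l with [] => 0 | x :: l => S (pr (g x) (code l)) end).
  assert (Hc : forall l l', code l = code l' -> l = l').
  { induction l as [|x l IH]; intros [|x' l'] E; simpl in E; try discriminate; auto.
    injection E; intro E'. apply pr_inj in E'. destruct E' as [E1 E2]. apply Hg in E1. apply IH in E2. subst; auto. }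
  exists (fun u : CV => code (proj1_sig u)). intros [l H] [l' H'] E. simpl in E.
  apply Hc in E. subst. f_equal. apply proof_irrelevance.
Qed.

End CompSec.

Definition S2 := und (Dk 1).

Definition mk (i j : nat) : vert S2 :=
  match lt_dec i j with
  | left H => exist (fun p : nat * nat => fst p < snd p) (i, j) H
  | right _ => exist (fun p : nat * nat => fst p < snd p) (0, 1) Nat.lt_0_1
  end.

Lemma mk_adj i j k : i < j -> j < k -> adj S2 (mk i j) (mk j k).
Proof.
  intros H1 H2. left. unfold mk. destruct (lt_dec i j); [|lia]. destruct (lt_dec j k); [|lia].
  reflexivity.
Qed.

Lemma propag (G : graph) (q p : list (vert G)) x s (u v : list (vert G)) :
  u = q ++ x :: s -> v = p ++ s -> p <> [] -> cadjL G u v -> exists q', v = q' ++ x :: s.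
Proof.
  intros -> -> Hp [[r [Hr E]]|[r [Hr E]]].
  - exists (r ++ q). rewrite E, <- app_assoc. reflexivity.
  - destruct (exists_last Hp) as [p' [y ->]].
    rewrite <- !app_assoc in E. simpl in E.
    assert (E' : q ++ [x] = (r ++ p') ++ [y]).
    { apply (app_inv_tail s). rewrite <- !app_assoc. simpl. rewrite E, app_assoc. reflexivity. }
    apply app_inj_tail in E'. destruct E' as [_ ->]. exists p'. rewrite <- app_assoc. reflexivity.
Qed.

Lemma S2_notto_Comp (G : graph) : ~ contains_subgraph G Komega -> ~ hom S2 (Comp G).
Proof.
  intros NK [g Hg]. apply NK.
  set (gp := fun i j => proj1_sig (g (mk i j))).
  assert (Hgp : forall i j k, i < j -> j < k -> cadjL G (gp i j) (gp j k)).
  { intros i j k H1 H2. apply Hg, mk_adj; auto. }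
  assert (Hcl : forall i j, cl G (gp i j)). { intros; unfold gp; apply proj2_sig. }
  set (sub := fun (s t : list (vert G)) => exists p, t = p ++ s).
  apply (chain G (fun s => cl G s /\ exists sg : nat -> nat, (forall i j, i < j -> sg i < sg j) /\
                   forall i j, i < j -> sub s (gp (sg i) (sg j)))).
  2:{ split. exact I. exists (fun n => n). split; auto. intros i j _. exists (gp i j).
      rewrite app_nil_r; reflexivity. }
  intros s [Hs [sg [Hinc Hsub]]].
  set (R := fun i j => gp (sg i) (sg j) = s).
  assert (Hind : forall i j k, i < j -> j < k -> R i j -> R j k -> False).
  { intros i j k H1 H2 E1 E2. pose proof (Hgp (sg i) (sg j) (sg k) (Hinc _ _ H1) (Hinc _ _ H2)) as HA.
    unfold R in E1, E2. rewrite E1, E2 in HA. destruct HA as [HA|HA]; eapply ssuf_irr; eauto. }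
  assert (Htau : exists tau : nat -> nat, (forall a b, a < b -> tau a < tau b) /\
                  forall a b, a < b -> ~ R (tau a) (tau b)).
  { destruct (classic (forall N, exists j, N <= j /\ ~ exists k, j < k /\ R j k)) as [HA|HB].
    - set (pick := fun N => proj1_sig (constructive_indefinite_description _ (HA N))).
      assert (Hpick : forall N, N <= pick N /\ ~ exists k, pick N < k /\ R (pick N) k).
      { intro N. unfold pick. destruct (constructive_indefinite_description _ _); simpl; auto. }
      set (tau := fix tau n := match n with 0 => pick 0 | S n => pick (S (tau n)) end).
      assert (Hst : forall n, tau n < tau (S n)).
      { intro n. simpl. destruct (Hpick (S (tau n))); lia. }
      assert (Hmono : forall a b, a < b -> tau a < tau b).
      { intros a b H. induction H. apply Hst. specialize (Hst m). lia. }
      exists tau. split; auto. intros a b H HR.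
      assert (Hp := proj2 (Hpick (match a with 0 => 0 | S n => S (tau n) end))).
      apply Hp. exists (tau b). split.
      + replace (pick _) with (tau a) by (destruct a; reflexivity). auto.
      + replace (pick _) with (tau a) by (destruct a; reflexivity). auto.
    - apply not_all_ex_not in HB. destruct HB as [N HN].
      exists (fun n => N + n). split. intros; lia.
      intros a b H HR. apply HN. apply NNPP; intro HC.
      assert (HU : exists k, N + b < k /\ R (N + b) k).
      { apply NNPP; intro HD. apply HC. exists (N + b). split. lia. exact HD. }
      destruct HU as [k [Hk HRk]]. eapply (Hind (N + a) (N + b) k); eauto. lia. }
  destruct Htau as [tau [Htinc Htnr]].
  set (sg' := fun n => sg (tau n)).
  assert (Hinc' : forall i j, i < j -> sg' i < sg' j). { intros; unfold sg'; auto. }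
  set (gq := fun a b => gp (sg' a) (sg' b)).
  assert (Hproper : forall a b, a < b -> exists p, p <> [] /\ gq a b = p ++ s).
  { intros a b H. destruct (Hsub (tau a) (tau b) (Htinc _ _ H)) as [p Hp].
    exists p. split; auto. intros ->. apply (Htnr a b H). exact Hp. }
  destruct (Hproper 0 1 Nat.lt_0_1) as [p01 [Hp01 E01]].
  destruct (exists_last Hp01) as [q [x Eq]].
  assert (Q01 : gq 0 1 = q ++ x :: s). { rewrite E01, Eq, <- app_assoc. reflexivity. }
  set (Q := fun a b => exists q', gq a b = q' ++ x :: s).
  assert (Hadjq : forall a b c, a < b -> b < c -> cadjL G (gq a b) (gq b c)).
  { intros. unfold gq. apply Hgp; apply Hinc'; auto. }
  assert (Step : forall a b c d, a < b -> c < d -> Q a b -> (cadjL G (gq a b) (gq c d) \/ cadjL G (gq c d) (gq a b)) -> Q c d).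
  { intros a b c d H1 H2 [q' Hq'] HA. destruct (Hproper c d H2) as [p [Hp Ep]].
    eapply (propag G q' p x s); eauto. destruct HA as [HA|HA]; auto.
    unfold cadjL in *; tauto. }
  assert (Q1 : forall b, 1 < b -> Q 1 b).
  { intros b H. apply (Step 0 1 1 b); [lia|lia|exists q; exact Q01|left; apply Hadjq; lia]. }
  assert (Qa : forall a b, 1 < a -> a < b -> Q a b).
  { intros a b H1 H2. apply (Step 1 a a b); [lia|lia|apply Q1; lia|left; apply Hadjq; lia]. }
  assert (Qall : forall a b, a < b -> Q a b).
  { intros a b H. destruct a as [|[|a]].
    - destruct (Nat.eq_dec b 1) as [->|Hb]. exists q; exact Q01.
      apply (Step b (S b) 0 b); [lia|lia|apply Qa; lia|right; apply Hadjq; lia].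
    - apply Q1; auto.
    - apply Qa; lia. }
  exists x. assert (Hclx : cl G (x :: s)).
  { apply (cl_app G q). rewrite <- Q01. unfold gq. apply Hcl. }
  split; [|exact (proj2 Hclx)]. split; [exact Hclx|].
  exists sg'. split; [exact Hinc'|]. intros a b H. destruct (Qall a b H) as [q' Hq']. exists q'. exact Hq'.
Qed.

Lemma hom_comp G H K : hom G H -> hom H K -> hom G K.
Proof. intros [f Hf] [g Hg]. exists (fun x => g (f x)). intros x y Hxy. auto. Qed.

Inductive t3 := A3 | B3 | C3.
Definition t3adj (x y : t3) := x <> y.
Lemma t3sym x y : t3adj x y -> t3adj y x. Proof. unfold t3adj; congruence. Qed.
Lemma t3irr x : ~ t3adj x x. Proof. unfold t3adj; congruence. Qed.
Definition K3 := Graph t3 t3adj t3sym t3irr.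

Lemma K3_count : countable_graph K3.
Proof. exists (fun x => match x with A3 => 0 | B3 => 1 | C3 => 2 end).
  intros [] [] E; simpl in E; congruence. Qed.
Lemma K3_FC : FC K3.
Proof. exists t3, [A3; B3; C3], (fun x => x). split. intros []; simpl; auto. auto. Qed.
Lemma K3_oddw : oddw K3 3.
Proof. split. exists 1; reflexivity. exists A3.
  apply (WS K3 A3 B3); [unfold adj; simpl; unfold t3adj; congruence|].
  apply (WS K3 B3 C3); [unfold adj; simpl; unfold t3adj; congruence|].
  apply (WS K3 C3 A3); [unfold adj; simpl; unfold t3adj; congruence|]. constructor. Qed.

Lemma oddw_hom G H n : hom G H -> oddw G n -> oddw H n.
Proof. intros [f Hf] [Ho [x Hx]]. split; auto. exists (f x). eapply W_hom; eauto. Qed.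

Theorem theorem1 (G : graph) (HG : countable_graph G) :
  (exists G' : graph, countable_graph G' /\ independent G G') <->
  (~ bipartite G /\ ~ contains_subgraph G Komega).
Proof.
  split.
  - intros [G' [HG' [N1 N2]]]. split.
    + intros [c Hc].
      destruct (classic (exists a b, adj G' a b)) as [[a [b Hab]]|Hno].
      * apply N1. exists (fun x => if c x then a else b). intros x y Hxy.
        specialize (Hc x y Hxy). destruct (c x), (c y); try congruence; auto. apply adj_sym; auto.
      * destruct (classic (exists v : vert G, True)) as [[v _]|He].
        -- apply N2. exists (fun _ => v). intros x y Hxy. exfalso; apply Hno; eauto.
        -- apply N1. exists (fun x => False_rect _ (He (ex_intro _ x I))). intros x. exfalso; eauto.
    + intros [f [Hinj Hhom]]. destruct HG' as [h Hh]. apply N2.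
      exists (fun x => f (h x)). intros x y Hxy. apply Hhom. unfold Komega, Komega_adj; simpl.
      intro E. apply Hh in E. subst. eapply adj_irrefl; eauto.
  - intros [NB NK].
    destruct (classic (FC G)) as [HFC|HnFC].
    + destruct (nonbip_oddw G NB) as [n Hn]. exists (und (Dk n)). split. apply Dk_count. split.
      * intro Hh. apply (oddw_hom _ _ _ Hh) in Hn. apply oddgirth in Hn. lia.
      * intro Hh. apply (Dk_notFC n). eapply FC_hom; eauto.
    + destruct (classic (hom S2 G)) as [HS|HnS].
      * exists (Comp G). split. apply Comp_count; auto. split.
        -- intro Hh. apply (S2_notto_Comp G NK). eapply hom_comp; eauto.
        -- apply Comp_notto; auto.
      * destruct (classic (hom G S2)) as [HGS|HnGS].
        -- exists K3. split. apply K3_count. split.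
           ++ intro Hh. apply HnFC. eapply FC_hom; eauto. apply K3_FC.
           ++ intro Hh. assert (Ho : oddw S2 3).
              { apply (oddw_hom K3); [eapply hom_comp; eauto|apply K3_oddw]. }
              apply oddgirth in Ho. lia.
        -- exists S2. split. apply Dk_count. split; auto.
Qed.
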